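(* Problem (RO-$\Sigma$) has an optimal solution $(B,\beta_1,\ldots,\beta_B)$ such that $c\prec_{\beta_1\cdots\beta_B}c'$ for all contests $c<c'$ with $c\equiv c'$.
   Context: A ballot style consists of contests $\mathcal{C}=\{1,\ldots,C\}$, candidates $\mathcal{N}=\{1,\ldots,N\}$ partitioned into nonempty sets $\mathcal{N}_c$ ($c\in\mathcal{C}$), and positive integers $v_c$. A filled-out ballot is a subset $\beta\subseteq\mathcal{N}$; $\mathscr{B}=\{\beta\subseteq\mathcal{N}: |\mathcal{N}_c\cap\beta|\le v_c\ \forall c\}$. For $i\in\mathcal{N}_c$: $T^*_i(\beta_1,\ldots,\beta_B)=\sum_{b=1}^B\mathbb{I}\{i\in\beta_b\text{ and }|\mathcal{N}_c\cap\beta_b|\le v_c\}$, and for a bijection $\sigma$ of $\mathcal{N}$, $T^\sigma_i(\beta_1,\ldots,\beta_B)=\sum_{b=1}^B\mathbb{I}\{\sigma(i)\in\beta_b\text{ and }|\{\sigma(j)\in\beta_b: j\in\mathcal{N}_c\}|\le v_c\}$. $\Sigma$ is the set of non-identity bijections $\mathcal{N}\to\mathcal{N}$. Problem (RO-$\Sigma$): minimize $B$ over $B\in\mathbb{N}$ and $\beta_1,\ldots,\beta_B\in\mathscr{B}$ subject to $T^\sigma(\beta_1,\ldots,\beta_B)\neq T^*(\beta_1,\ldots,\beta_B)$ for all $\sigma\in\Sigma$. Two contests $c,c'$ are equivalent, $c\equiv c'$, iff $|\mathcal{N}_c|=|\mathcal{N}_{c'}|$ and $v_c=v_{c'}$.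 $\mathcal{N}_c^k$ denotes the candidate with the $k$-th smallest index in $\mathcal{N}_c$. With $n(i)=|\{b\in\{1,\ldots,B\}: i\in\beta_b\}|$, we write $c\prec_{\beta_1\cdots\beta_B}c'$ iff $c\equiv c'$ and there exists $k\in\{1,\ldots,|\mathcal{N}_c|\}$ with $n(\mathcal{N}_c^{m})=n(\mathcal{N}_{c'}^{m})$ for all $m\in\{k+1,\ldots,|\mathcal{N}_c|\}$ and $n(\mathcal{N}_c^{k})<n(\mathcal{N}_{c'}^{k})$. *)

(* Defs.v *)
From mathcomp Require Import all_boot fingroup perm.
Set Implicit Arguments. Unset Strict Implicit. Unset Printing Implicit Defensive.

(* Ballot style: candidates 'I_N, contests 'I_C, [con i] = the contest of
   candidate i (so N_c = [set i | con i == c]), vote limits [v c]. *)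

Definition Ncands (N C : nat) (con : 'I_N -> 'I_C) (c : 'I_C) : {set 'I_N} :=
  [set i | con i == c].

Definition valid_ballot (N C : nat) (con : 'I_N -> 'I_C) (v : 'I_C -> nat)
  (b : {set 'I_N}) : Prop :=
  forall c : 'I_C, #|Ncands con c :&: b| <= v c.

Definition Tstar (N C : nat) (con : 'I_N -> 'I_C) (v : 'I_C -> nat)
  (bs : seq {set 'I_N}) : {ffun 'I_N -> nat} :=
  [ffun i => \sum_(b <- bs)
     ((i \in b) && (#|Ncands con (con i) :&: b| <= v (con i)))].

Definition Tsigma (N C : nat) (con : 'I_N -> 'I_C) (v : 'I_C -> nat)
  (s : {perm 'I_N}) (bs : seq {set 'I_N}) : {ffun 'I_N -> nat} :=
  [ffun i => \sum_(b <- bs)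
     ((s i \in b) &&
      (#|[set s j | j in Ncands con (con i)] :&: b| <= v (con i)))].

(* Feasibility for (RO-Σ): all ballots valid and T^σ ≠ T^* for every
   non-identity bijection σ. B = size bs. *)
Definition feasible (N C : nat) (con : 'I_N -> 'I_C) (v : 'I_C -> nat)
  (bs : seq {set 'I_N}) : Prop :=
  (forall b, b \in bs -> valid_ballot con v b) /\
  (forall s : {perm 'I_N}, s != 1%g -> Tsigma con v s bs <> Tstar con v bs).

Definition equiv_contest (N C : nat) (con : 'I_N -> 'I_C) (v : 'I_C -> nat)
  (c c' : 'I_C) : Prop :=
  #|Ncands con c| = #|Ncands con c'| /\ v c = v c'.

Definition nb (N : nat) (bs : seq {set 'I_N}) (i : 'I_N) : nat :=
  count (fun b : {set 'I_N} => i \in b) bs.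

(* n(N_c^k), k = 1..|N_c|: N_c^k is the k-th smallest index in N_c. *)
Definition nck (N C : nat) (con : 'I_N -> 'I_C) (bs : seq {set 'I_N})
  (c : 'I_C) (k : nat) : nat :=
  nth 0 [seq nb bs i | i <- sort (fun i j : 'I_N => (i <= j)%N)
                                  (enum (Ncands con c))] k.-1.

Definition prec (N C : nat) (con : 'I_N -> 'I_C) (v : 'I_C -> nat)
  (bs : seq {set 'I_N}) (c c' : 'I_C) : Prop :=
  equiv_contest con v c c' /\
  exists k, 1 <= k <= #|Ncands con c| /\
    (forall m, k + 1 <= m <= #|Ncands con c| -> nck con bs c m = nck con bs c' m) /\
    nck con bs c k < nck con bs c' k.

(* Main.v *)
Require Import Defs.
From mathcomp Require Import all_boot fingroup perm.
From mathcomp Require Import zify.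
From Stdlib Require Import Classical.
Set Implicit Arguments. Unset Strict Implicit. Unset Printing Implicit Defensive.

Lemma sum_bool_count (T : eqType) (P : pred T) (s : seq T) :
  \sum_(b <- s) (P b : nat) = count P s.
Proof. by elim: s => [|x s IH]; rewrite ?big_nil ?big_cons ?IH. Qed.

Lemma Tstar_nb N C (con : 'I_N -> 'I_C) v bs :
  (forall b, b \in bs -> valid_ballot con v b) -> forall i, Tstar con v bs i = nb bs i.
Proof.
move=> Hb i; rewrite ffunE /nb -sum_bool_count; apply: eq_big_seq => b Hbb.
by rewrite (Hb b Hbb (con i)) andbT.
Qed.

Lemma Tstar_Tsigma1 N C (con : 'I_N -> 'I_C) v bs :
  Tstar con v bs = Tsigma con v 1%g bs.
Proof.
apply/ffunP => i; rewrite !ffunE perm1; apply: eq_bigr => b _.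
have -> : [set (1%g : {perm 'I_N}) j | j in Ncands con (con i)] = Ncands con (con i).
  by rewrite -[RHS]imset_id; apply: eq_imset => j; rewrite perm1.
by [].
Qed.

Lemma imset_perm_eq N (p : {perm 'I_N}) (A B : {set 'I_N}) :
  (forall x, x \in A -> p x \in B) -> #|A| = #|B| -> B = p @: A.
Proof.
move=> H HAB; apply/esym/eqP; rewrite eqEcard card_imset; last exact: perm_inj.
rewrite HAB leqnn andbT.
by apply/subsetP => y /imsetP [x Hx ->]; apply: H.
Qed.

Lemma Tsigma_map N C (con : 'I_N -> 'I_C) v (p s : {perm 'I_N}) (bs : seq {set 'I_N})
  (Hp : forall i, Ncands con (con (p i)) = p @: Ncands con (con i))
  (Hv : forall i, v (con (p i)) = v (con i)) (i : 'I_N) :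
  Tsigma con v s (map (fun b : {set 'I_N} => p @: b) bs) (p i) = Tsigma con v (p * s * p^-1)%g bs i.
Proof.
rewrite !ffunE big_map; apply: eq_bigr => b _.
have E : forall j, s (p j) = p ((p * s * p^-1)%g j) by move=> j; rewrite !permM permKV.
rewrite E mem_imset; last exact: perm_inj.
rewrite Hp Hv.
have -> : [set s j | j in p @: Ncands con (con i)] = p @: [set (p * s * p^-1)%g j | j in Ncands con (con i)].
  rewrite -!imset_comp; apply: eq_imset => j /=; exact: E.
by rewrite -imsetI ?card_imset //; [exact: perm_inj | move=> x y _ _; exact: perm_inj].
Qed.

Lemma nb_map N (p : {perm 'I_N}) (bs : seq {set 'I_N}) i : nb (map (fun b : {set 'I_N} => p @: b) bs) (p i) = nb bs i.
Proof. by rewrite /nb count_map; apply: eq_count => b /=; rewrite mem_imset //; exact: perm_inj. Qed.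

Lemma feasible_map N C (con : 'I_N -> 'I_C) v (p : {perm 'I_N}) (bs : seq {set 'I_N})
  (Hne : forall c : 'I_C, exists i : 'I_N, con i = c)
  (Hp : forall i, Ncands con (con (p i)) = p @: Ncands con (con i))
  (Hv : forall i, v (con (p i)) = v (con i)) :
  feasible con v bs -> feasible con v (map (fun b : {set 'I_N} => p @: b) bs).
Proof.
move=> [Hb Hs]; split.
  move=> b' /mapP [b Hbb ->] c.
  have [i Hi] := Hne c.
  have Hc : con (p (p^-1 i)%g) = c by rewrite permKV.
  rewrite -Hc Hp -imsetI; last by move=> x y _ _; exact: perm_inj.
  rewrite card_imset; last exact: perm_inj.
  by rewrite Hv; apply: Hb.
move=> s Hs1 Heq; apply: (Hs (p * s * p^-1)%g).
  apply: contra Hs1 => /eqP H; apply/eqP.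
  have -> : s = (p^-1 * (p * s * p^-1) * p)%g by rewrite !mulgA mulVg mul1g mulgKV.
  by rewrite H mulg1 mulVg.
apply/ffunP => i.
rewrite -Tsigma_map // Heq Tstar_Tsigma1 Tsigma_map // mulg1 mulgV -Tstar_Tsigma1.
by [].
Qed.

Definition keyf (a : nat -> nat) (L x : nat) := \sum_(k < L) a k * x ^ k.

Lemma keyf_lt a L x : (forall k, k < L -> a k < x) -> keyf a L x < x ^ L.
Proof.
rewrite /keyf; elim: L => [|L IH] H; first by rewrite big_ord0 expn0.
rewrite big_ord_recr /= expnS.
have h1 := IH (fun k hk => H k (ltnW hk)).
have h2 := H L (ltnSn L).
move: h1 h2; set S := \sum_(_ < _) _; set X := x ^ L; nia.
Qed.

Lemma keyf_lex a b L x : (forall k, k < L -> a k < x) -> (forall k, k < L -> b k < x) ->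
  keyf a L x < keyf b L x ->
  exists k, k < L /\ a k < b k /\ (forall j, k < j < L -> a j = b j).
Proof.
elim: L => [|L IH] Ha Hb; first by rewrite /keyf !big_ord0.
have ha := keyf_lt (fun k hk => Ha k (ltnW hk)).
have hb := keyf_lt (fun k hk => Hb k (ltnW hk)).
rewrite /keyf !big_ord_recr /= -!/(keyf _ L x).
have [lt|gt|eq] := ltngtP (a L) (b L).
- move=> _; exists L; split => //; split => // j; lia.
- move: ha hb gt; set SA := keyf a L x; set SB := keyf b L x; set X := x ^ L; nia.
- move=> h.
  have h' : keyf a L x < keyf b L x by rewrite eq in h; lia.
  have [k [k1 [k2 k3]]] := IH (fun k hk => Ha k (ltnW hk)) (fun k hk => Hb k (ltnW hk)) h'.
  exists k; split; first lia; split => // j hj.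
  have [jL|jL] := ltnP j L; first by apply: k3; lia.
  have -> : j = L by lia.
  by [].
Qed.

Lemma keyf_eq a b L x : (forall k, k < L -> a k < x) -> (forall k, k < L -> b k < x) ->
  keyf a L x = keyf b L x -> forall k, k < L -> a k = b k.
Proof.
elim: L => [|L IH] Ha Hb; first by [].
have ha := keyf_lt (fun k hk => Ha k (ltnW hk)).
have hb := keyf_lt (fun k hk => Hb k (ltnW hk)).
rewrite /keyf !big_ord_recr /= -!/(keyf _ L x).
have [lt|gt|eq] := ltngtP (a L) (b L).
- move: ha hb lt; set SA := keyf a L x; set SB := keyf b L x; set X := x ^ L; nia.
- move: ha hb gt; set SA := keyf a L x; set SB := keyf b L x; set X := x ^ L; nia.
- move=> h.
  have h' : keyf a L x = keyf b L x by rewrite eq in h; lia.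
  move=> k hk; have [kL|kL] := ltnP k L.
    exact: (IH (fun k hk => Ha k (ltnW hk)) (fun k hk => Hb k (ltnW hk)) h').
  by have -> : k = L by lia.
Qed.

Definition sc N C (con : 'I_N -> 'I_C) (c : 'I_C) :=
  sort (fun i j : 'I_N => (i <= j)%N) (enum (Ncands con c)).

Lemma sc_uniq N C (con : 'I_N -> 'I_C) c : uniq (sc con c).
Proof. by rewrite /sc sort_uniq enum_uniq. Qed.

Lemma mem_sc N C (con : 'I_N -> 'I_C) c x : (x \in sc con c) = (con x == c).
Proof. by rewrite /sc mem_sort mem_enum inE. Qed.

Lemma size_sc N C (con : 'I_N -> 'I_C) c : size (sc con c) = #|Ncands con c|.
Proof. by rewrite /sc size_sort cardE. Qed.

Definition gmap N C (con : 'I_N -> 'I_C) a b (i : 'I_N) :=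
  nth i (sc con b) (index i (sc con a)).

Lemma gmap_mem N C (con : 'I_N -> 'I_C) a b i :
  #|Ncands con a| = #|Ncands con b| -> con i = a -> con (gmap con a b i) = b.
Proof.
move=> Hc Hi; apply/eqP; rewrite -mem_sc /gmap; apply: mem_nth.
by rewrite size_sc -Hc -size_sc index_mem mem_sc Hi.
Qed.

Lemma gmap_inv N C (con : 'I_N -> 'I_C) a b i :
  #|Ncands con a| = #|Ncands con b| -> con i = a -> gmap con b a (gmap con a b i) = i.
Proof.
move=> Hc Hi; rewrite {1}/gmap /gmap.
have Hin : i \in sc con a by rewrite mem_sc Hi.
have Hs : index i (sc con a) < size (sc con b) by rewrite size_sc -Hc -size_sc index_mem.
rewrite index_uniq ?sc_uniq //.
by rewrite (set_nth_default i) ?nth_index // size_sc Hc -size_sc.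
Qed.

Definition swapf N C (con : 'I_N -> 'I_C) c c' (i : 'I_N) :=
  if con i == c then gmap con c c' i else if con i == c' then gmap con c' c i else i.

Lemma swapf_inv N C (con : 'I_N -> 'I_C) c c' :
  c != c' -> #|Ncands con c| = #|Ncands con c'| ->
  cancel (swapf con c c') (swapf con c c').
Proof.
move=> Hne Hc i; rewrite /swapf.
case: (eqVneq (con i) c) => Hi.
  rewrite gmap_mem // eq_sym (negbTE Hne) eqxx gmap_inv //.
case: (eqVneq (con i) c') => Hi'.
  by rewrite gmap_mem // eqxx gmap_inv.
by rewrite (negbTE Hi) (negbTE Hi').
Qed.

Definition swp N C (con : 'I_N -> 'I_C) c c' (Hne : c != c')
  (Hc : #|Ncands con c| = #|Ncands con c'|) : {perm 'I_N} :=
  perm (can_inj (swapf_inv Hne Hc)).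

Lemma swpE N C (con : 'I_N -> 'I_C) c c' (Hne : c != c') (Hc : #|Ncands con c| = #|Ncands con c'|) i :
  swp Hne Hc i = swapf con c c' i.
Proof. by rewrite permE. Qed.

Lemma swp_con N C (con : 'I_N -> 'I_C) c c' (Hne : c != c') (Hc : #|Ncands con c| = #|Ncands con c'|) i :
  con (swp Hne Hc i) = (if con i == c then c' else if con i == c' then c else con i).
Proof.
rewrite swpE /swapf.
case: (eqVneq (con i) c) => Hi; first exact: gmap_mem.
case: (eqVneq (con i) c') => Hi' //; apply: gmap_mem => //.
Qed.



Lemma swp_N N C (con : 'I_N -> 'I_C) c c' (Hne : c != c') (Hc : #|Ncands con c| = #|Ncands con c'|) i :
  Ncands con (con (swp Hne Hc i)) = swp Hne Hc @: Ncands con (con i).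
Proof.
apply: imset_perm_eq.
  move=> x; rewrite !inE => /eqP Hx; rewrite !swp_con Hx.
  by [].
rewrite swp_con.
case: (eqVneq (con i) c) => Hi; first by rewrite Hi.
case: (eqVneq (con i) c') => Hi' //; by rewrite Hi'.
Qed.

Lemma swp_v N C (con : 'I_N -> 'I_C) (v : 'I_C -> nat) c c' (Hne : c != c') (Hc : #|Ncands con c| = #|Ncands con c'|) i :
  v c = v c' -> v (con (swp Hne Hc i)) = v (con i).
Proof.
move=> Hv; rewrite swp_con.
case: (eqVneq (con i) c) => Hi; first by rewrite Hi.
by case: (eqVneq (con i) c') => Hi' //; rewrite Hi'.
Qed.

Lemma sc_swp N C (con : 'I_N -> 'I_C) c c' (Hne : c != c') (Hc : #|Ncands con c| = #|Ncands con c'|) :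
  sc con c = map (swp Hne Hc) (sc con c').
Proof.
case Es: (sc con c) => [|x0 s].
  have H0 : size (sc con c') = 0 by rewrite size_sc -Hc -size_sc Es.
  by rewrite (size0nil H0).
rewrite -Es; apply: (eq_from_nth (x0 := x0)); first by rewrite size_map !size_sc.
move=> j; rewrite size_sc Hc -size_sc => Hj.
rewrite (nth_map x0) // swpE /swapf.
have Hy : con (nth x0 (sc con c') j) = c'.
  by apply/eqP; rewrite -mem_sc mem_nth.
rewrite Hy eq_sym (negbTE Hne) eqxx /gmap index_uniq ?sc_uniq //.
by apply: set_nth_default; rewrite size_sc Hc -size_sc.
Qed.

Lemma swp_fix N C (con : 'I_N -> 'I_C) c c' (Hne : c != c') (Hc : #|Ncands con c| = #|Ncands con c'|) i :
  con i != c -> con i != c' -> swp Hne Hc i = i.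
Proof. by move=> H1 H2; rewrite swpE /swapf (negbTE H1) (negbTE H2). Qed.

Lemma swp_invol N C (con : 'I_N -> 'I_C) c c' (Hne : c != c') (Hc : #|Ncands con c| = #|Ncands con c'|) i :
  swp Hne Hc (swp Hne Hc i) = i.
Proof. by rewrite !swpE swapf_inv. Qed.



Definition key N C (con : 'I_N -> 'I_C) (bs : seq {set 'I_N}) c :=
  keyf (fun k => nck con bs c k.+1) #|Ncands con c| (size bs).+1.

Definition Phi N C (con : 'I_N -> 'I_C) (bs : seq {set 'I_N}) :=
  \sum_(c : 'I_C) c * key con bs c.

Lemma nckE N C (con : 'I_N -> 'I_C) (bs : seq {set 'I_N}) c k :
  nck con bs c k.+1 = nth 0 (map (nb bs) (sc con c)) k.
Proof. by []. Qed.

Lemma nck_lt N C (con : 'I_N -> 'I_C) (bs : seq {set 'I_N}) c k :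
  nck con bs c k.+1 < (size bs).+1.
Proof.
rewrite nckE ltnS.
have [Hj|Hj] := ltnP k (size (map (nb bs) (sc con c))); last by rewrite nth_default.
have /mapP [x _ ->] := mem_nth 0 Hj.
exact: count_size.
Qed.

Lemma key_lt N C (con : 'I_N -> 'I_C) (bs : seq {set 'I_N}) c :
  key con bs c < (size bs).+1 ^ N.
Proof.
apply: (leq_trans (keyf_lt _)); first by move=> k _; apply: nck_lt.
apply: leq_pexp2l => //; rewrite -[X in _ <= X]card_ord; exact: max_card.
Qed.

Lemma Phi_le N C (con : 'I_N -> 'I_C) (bs : seq {set 'I_N}) :
  Phi con bs <= C * (C * (size bs).+1 ^ N).
Proof.
rewrite /Phi -[X in X * _]card_ord -sum_nat_const.
apply: leq_sum => c _; apply: leq_mul; first exact: ltnW.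
exact: ltnW (key_lt _ _ _).
Qed.

Lemma prec_of_key N C (con : 'I_N -> 'I_C) v (bs : seq {set 'I_N}) c c' :
  equiv_contest con v c c' -> key con bs c < key con bs c' -> prec con v bs c c'.
Proof.
move=> [Hc Hv] Hk; split; first by [].
rewrite /key -Hc in Hk.
have [k [k1 [k2 k3]]] := keyf_lex (fun k _ => nck_lt con bs c k) (fun k _ => nck_lt con bs c' k) Hk.
exists k.+1; split; first by apply/andP; split.
split => // m Hm.
have -> : m = (m.-1).+1 by lia.
apply: k3; lia.
Qed.



Lemma nb_perm N (p : {perm 'I_N}) (bs : seq {set 'I_N}) (Hp : forall i, p (p i) = i) x :
  nb (map (fun b : {set 'I_N} => p @: b) bs) x = nb bs (p x).
Proof. by rewrite -{1}(Hp x) nb_map. Qed.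

Lemma swp_map_sc N C (con : 'I_N -> 'I_C) c c' (Hne : c != c')
  (Hc : #|Ncands con c| = #|Ncands con c'|) d :
  map (swp Hne Hc) (sc con d) = sc con (if d == c then c' else if d == c' then c else d).
Proof.
case: (eqVneq d c) => Hd.
  rewrite Hd (sc_swp Hne Hc) -map_comp map_id_in // => x _ /=; exact: swp_invol.
case: (eqVneq d c') => Hd'.
  by rewrite Hd' (sc_swp Hne Hc).
apply: map_id_in => x; rewrite mem_sc => /eqP Hx /=.
by apply: swp_fix; rewrite Hx.
Qed.

Lemma nck_swp N C (con : 'I_N -> 'I_C) c c' (Hne : c != c')
  (Hc : #|Ncands con c| = #|Ncands con c'|) (bs : seq {set 'I_N}) d k :
  nck con (map (fun b : {set 'I_N} => swp Hne Hc @: b) bs) d k =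
  nck con bs (if d == c then c' else if d == c' then c else d) k.
Proof.
rewrite /nck.
change (sort (fun i j : 'I_N => (i <= j)%N) (enum (Ncands con d))) with (sc con d).
change (sort (fun i j : 'I_N => (i <= j)%N)
   (enum (Ncands con (if d == c then c' else if d == c' then c else d))))
  with (sc con (if d == c then c' else if d == c' then c else d)).
rewrite -swp_map_sc -map_comp; congr nth; apply: eq_map => x /=.
apply: nb_perm; exact: swp_invol.
Qed.

Lemma key_swp N C (con : 'I_N -> 'I_C) c c' (Hne : c != c')
  (Hc : #|Ncands con c| = #|Ncands con c'|) (bs : seq {set 'I_N}) d :
  key con (map (fun b : {set 'I_N} => swp Hne Hc @: b) bs) d =
  key con bs (if d == c then c' else if d == c' then c else d).
Proof.
rewrite /key size_map.
have -> : #|Ncands con d| = #|Ncands con (if d == c then c' else if d == c' then c else d)|.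
  by case: (eqVneq d c) => [->//|_]; case: (eqVneq d c') => [->//|_].
by apply: eq_bigr => k _; rewrite nck_swp.
Qed.

Lemma sum_split2 C (c c' : 'I_C) (F : 'I_C -> nat) : c != c' ->
  \sum_(d : 'I_C) F d = F c + F c' + \sum_(d | (d != c) && (d != c')) F d.
Proof.
move=> Hne; rewrite (bigD1 c) //= (bigD1 c') /=; last by rewrite eq_sym.
by rewrite addnA.
Qed.

Lemma Phi_swp N C (con : 'I_N -> 'I_C) c c' (Hne : c != c')
  (Hc : #|Ncands con c| = #|Ncands con c'|) (bs : seq {set 'I_N}) :
  Phi con (map (fun b : {set 'I_N} => swp Hne Hc @: b) bs) + c * key con bs c + c' * key con bs c'
  = Phi con bs + c * key con bs c' + c' * key con bs c.
Proof.
rewrite /Phi (sum_split2 _ Hne) [X in _ = X + _ + _](sum_split2 _ Hne).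
rewrite !key_swp eqxx eq_sym (negbTE Hne) eqxx.
under eq_bigr => d /andP [H1 H2] do rewrite key_swp (negbTE H1) (negbTE H2).
lia.
Qed.



Lemma key_eq_false N C (con : 'I_N -> 'I_C) v c c' (bs : seq {set 'I_N})
  (Hne0 : forall c : 'I_C, exists i : 'I_N, con i = c) :
  c != c' -> equiv_contest con v c c' -> feasible con v bs ->
  key con bs c = key con bs c' -> False.
Proof.
move=> Hne [Hc Hv] [Hb Hs] Hk.
rewrite /key -Hc in Hk.
have Hd := keyf_eq (fun k _ => nck_lt con bs c k) (fun k _ => nck_lt con bs c' k) Hk.
have Hm : map (nb bs) (sc con c) = map (nb bs) (sc con c').
  apply: (eq_from_nth (x0 := 0)); first by rewrite !size_map !size_sc.
  move=> j; rewrite size_map size_sc => Hj.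
  by rewrite -!nckE Hd.
set p := swp Hne Hc.
have H1 : forall y, y \in sc con c' -> nb bs (p y) = nb bs y.
  move: Hm; rewrite (sc_swp Hne Hc) -map_comp => /eq_in_map H y Hy.
  exact: H.
have Hnb : forall i, nb bs (p i) = nb bs i.
  move=> i; case: (eqVneq (con i) c) => Hi.
    have Hy : p i \in sc con c' by rewrite mem_sc swp_con Hi eqxx.
    by rewrite -H1 // swp_invol.
  case: (eqVneq (con i) c') => Hi'.
    by apply: H1; rewrite mem_sc Hi'.
  by rewrite swp_fix.
apply: (Hs p).
  have [i Hi] := Hne0 c.
  apply/eqP => Hp1.
  have := swp_con Hne Hc i; rewrite -/p Hp1 perm1 Hi eqxx => Hcc.
  by move: (Hne); rewrite -Hcc eqxx.
apply/ffunP => i.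
rewrite Tstar_nb // -Hnb -(Tstar_nb Hb) !ffunE.
apply: eq_bigr => b _.
by rewrite -swp_N swp_v.
Qed.



Definition bs0 N : seq {set 'I_N} :=
  flatten [seq nseq (val i) [set i] | i <- enum 'I_N].

Lemma bs0_single N b : b \in bs0 N -> exists i, b = [set i].
Proof.
move=> /flattenP [s /mapP [i _ ->]]; rewrite mem_nseq => /andP [_ /eqP ->].
by exists i.
Qed.

Lemma nb_bs0 N (j : 'I_N) : nb (bs0 N) j = j.
Proof.
rewrite /nb /bs0 count_flatten -map_comp sumnE big_map.
under eq_bigr => i _ do rewrite /= count_nseq in_set1.
rewrite big_enum /= (bigD1 j) //= eqxx mul1n big1 ?addn0 // => i Hi.
by rewrite eq_sym (negbTE Hi).
Qed.

Lemma feasible_bs0 N C (con : 'I_N -> 'I_C) v (Hv : forall c, 0 < v c) :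
  feasible con v (bs0 N).
Proof.
have Hval : forall b, b \in bs0 N -> valid_ballot con v b.
  move=> b /bs0_single [i ->] c.
  apply: leq_trans (Hv c).
  by rewrite -(cards1 i); apply: subset_leq_card; apply: subsetIr.
split => // s Hs1 Heq; apply: (negP Hs1); apply/eqP/permP => i; rewrite perm1.
have := congr1 (fun f : {ffun 'I_N -> nat} => f i) Heq; rewrite /= Tstar_nb // ffunE.
rewrite (eq_big_seq (fun b : {set 'I_N} => (s i \in b) : nat)); last first.
  move=> b /bs0_single [k ->]; rewrite (leq_trans (leq_trans (subset_leq_card (subsetIr _ _)) _) (Hv _)) ?andbT //.
  by rewrite cards1.
rewrite sum_bool_count -/(nb (bs0 N) (s i)) !nb_bs0 => H; exact: val_inj.
Qed.

Lemma min_feasible N C (con : 'I_N -> 'I_C) v :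
  forall n bs, size bs <= n -> feasible con v bs ->
  exists bs, feasible con v bs /\ forall bs', feasible con v bs' -> size bs <= size bs'.
Proof.
elim => [|n IH] bs Hn Hf.
  by exists bs; split => // bs' _; rewrite (leq_trans Hn).
case: (classic (exists bs', feasible con v bs' /\ size bs' < size bs)) => [[bs' [H1 H2]]|H].
  apply: (IH bs') => //; lia.
exists bs; split => // bs' H'; rewrite leqNgt; apply/negP => H2; apply: H; exists bs'; tauto.
Qed.

Lemma improve N C (con : 'I_N -> 'I_C) v
  (Hne0 : forall c : 'I_C, exists i : 'I_N, con i = c) :
  forall d (bs : seq {set 'I_N}), C * (C * (size bs).+1 ^ N) - Phi con bs < d ->
  feasible con v bs -> (forall bs', feasible con v bs' -> size bs <= size bs') ->
  exists bs : seq {set 'I_N},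
    feasible con v bs /\
    (forall bs' : seq {set 'I_N}, feasible con v bs' -> size bs <= size bs') /\
    (forall c c' : 'I_C, c < c' -> equiv_contest con v c c' -> prec con v bs c c').
Proof.
elim => [|d IH] bs Hd Hf Hopt; first by [].
case: (classic (exists c c' : 'I_C, c < c' /\ equiv_contest con v c c' /\ ~ prec con v bs c c'))
  => [[c [c' [H1 [H2 H3]]]]|Hn]; last first.
  exists bs; split => //; split => // c c' H1 H2; apply: NNPP => H3; apply: Hn.
  by exists c, c'.
have Hne : c != c' by rewrite neq_ltn H1.
have [Hc Hvv] := H2.
have [lt|gt|eq] := ltngtP (key con bs c) (key con bs c').
- by exfalso; apply: H3; apply: prec_of_key.
- set bs' := map (fun b : {set 'I_N} => swp Hne Hc @: b) bs.
  have Hsz : size bs' = size bs by rewrite size_map.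
  have Hf' : feasible con v bs'.
    exact: (feasible_map Hne0 (swp_N Hne Hc) (fun i => swp_v (v := v) Hne Hc i Hvv) Hf).
  apply: (IH bs') => //; last by rewrite Hsz.
  have HP := Phi_swp Hne Hc bs.
  have HB := Phi_le con bs'.
  rewrite Hsz in HB *.
  move: HP HB Hd gt H1; rewrite -/bs'.
  set P' := Phi con bs'; set P := Phi con bs; set K := C * (C * (size bs).+1 ^ N).
  set k1 := key con bs c; set k2 := key con bs c'.
  nia.
- by exfalso; apply: (key_eq_false Hne0 Hne H2 Hf eq).
Qed.

Theorem proposition2 (C N : nat) (con : 'I_N -> 'I_C) (v : 'I_C -> nat)
  (Hnonempty : forall c : 'I_C, exists i : 'I_N, con i = c)
  (Hv : forall c : 'I_C, 0 < v c) :
  exists bs : seq {set 'I_N},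
    feasible con v bs /\
    (forall bs' : seq {set 'I_N}, feasible con v bs' -> size bs <= size bs') /\
    (forall c c' : 'I_C, c < c' -> equiv_contest con v c c' -> prec con v bs c c').
Proof.
have [bs [Hf Hopt]] := min_feasible (leqnn _) (feasible_bs0 con Hv).
apply: (improve Hnonempty (d := (C * (C * (size bs).+1 ^ N) - Phi con bs).+1)) => //.
Qed.
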